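(* Let $\mathcal{H}$ be a Hilbert space and let $\mathbf{L}_1,\mathbf{L}_2:\mathcal{H}^n\to\mathcal{H}^n$ be invertible and lower triangular $n\times n$ matrices of operators on $\mathcal{H}$. If $$\mathbf{L}_1\mathbf{L}_1^*=\mathbf{L}_2\mathbf{L}_2^*,$$ then $\mathbf{L}_2=\mathbf{L}_1\,\mathrm{diag}(\mathbf{L}_1)^{-1}\,\mathrm{diag}(\mathbf{L}_2)$.
   Context: For an $n\times n$ matrix of operators $\mathbf{L}$, $\mathrm{diag}(\mathbf{L})$ denotes the diagonal matrix of operators with the same diagonal entries as $\mathbf{L}$; $^*$ denotes the Hilbert space adjoint. *)

(* Defs.v *)
From HB Require Import structures.
From mathcomp Require Import all_boot all_order all_algebra.
From mathcomp Require Import reals.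
From mathcomp Require Import complex.
From Stdlib Require Import ClassicalEpsilon.
Set Implicit Arguments. Unset Strict Implicit. Unset Printing Implicit Defensive.
Import Order.TTheory GRing.Theory Num.Theory.
Local Open Scope ring_scope.
Local Open Scope complex_scope.

Section Hilbert.
Variable R : realType.
Variable H : lmodType R[i].
Variable ip : H -> H -> R[i].

Definition is_inner_product : Prop :=
  [/\ forall (a : R[i]) (x y z : H), ip (a *: x + y) z = a * ip x z + ip y z,
      forall x y : H, ip y x = (ip x y)^*,
      forall x : H, 0 <= ip x x
    & forall x : H, ip x x = 0 -> x = 0].

Definition ip_complete : Prop :=
  forall u : nat -> H,
    (forall e : R, 0 < e -> exists N : nat, forall m k : nat, (N <= m)%N -> (N <= k)%N ->
        `|ip (u m - u k) (u m - u k)| < e%:C) ->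
    exists l : H, forall e : R, 0 < e -> exists N : nat, forall m : nat, (N <= m)%N ->
        `|ip (u m - l) (u m - l)| < e%:C.

Definition is_hilbert : Prop := is_inner_product /\ ip_complete.

Definition bounded_op (A : H -> H) : Prop :=
  (forall (a : R[i]) (x y : H), A (a *: x + y) = a *: A x + A y) /\
  exists M : R, forall x : H, `|ip (A x) (A x)| <= M%:C * `|ip x x|.

Definition adjoint (A : H -> H) : H -> H :=
  epsilon (inhabits id) (fun B : H -> H => forall x y : H, ip (A x) y = ip x (B y)).

Definition opmx (n : nat) := 'I_n -> 'I_n -> H -> H.

Definition opmx_mul n (A B : opmx n) : opmx n :=
  fun i j x => \sum_(k < n) A i k (B k j x).

Definition opmx_id n : opmx n := fun i j x => if i == j then x else 0.

Definition opmx_adj n (A : opmx n) : opmx n := fun i j => adjoint (A j i).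

Definition opmx_diag n (A : opmx n) : opmx n :=
  fun i j x => if i == j then A i i x else 0.

Definition lower_tri n (A : opmx n) : Prop :=
  forall i j : 'I_n, (i < j)%N -> forall x, A i j x = 0.

Definition is_inverse n (A B : opmx n) : Prop :=
  opmx_mul A B = @opmx_id n /\ opmx_mul B A = @opmx_id n.

Definition invertible_lower n (A : opmx n) : Prop :=
  lower_tri A /\ exists B : opmx n, lower_tri B /\ is_inverse A B.

Definition opmx_inv n (A : opmx n) : opmx n :=
  epsilon (inhabits (@opmx_id n)) (fun B : opmx n => is_inverse A B).

End Hilbert.

(* Main.v *)
Require Import Defs.
From HB Require Import structures.
From mathcomp Require Import all_boot all_order all_algebra.
From mathcomp Require Import reals complex.
From mathcomp Require Import boolp classical_sets.
From mathcomp Require Import ring lra.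
From Stdlib Require Import ClassicalEpsilon Classical FunctionalExtensionality.
Set Implicit Arguments. Unset Strict Implicit. Unset Printing Implicit Defensive.
Import Order.TTheory GRing.Theory Num.Theory.
Local Open Scope ring_scope.
Local Open Scope complex_scope.

Notation RE := complex.Re.
Notation IM := complex.Im.

Section Basic.
Variable R : realType.
Variable H : lmodType R[i].
Variable ip : H -> H -> R[i].
Hypothesis hip : is_inner_product ip.

Lemma ipDZl a x y z : ip (a *: x + y) z = a * ip x z + ip y z.
Proof. by case: hip. Qed.
Lemma ipC x y : ip y x = (ip x y)^*.
Proof. by case: hip. Qed.
Lemma ip_ge0 x : 0 <= ip x x.
Proof. by case: hip => _ _ h _; apply: h. Qed.
Lemma ip_eq0 x : ip x x = 0 -> x = 0.
Proof. by case: hip => _ _ _ h; apply: h. Qed.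

Lemma cjD (a b : R[i]) : (a + b)^* = a^* + b^*.
Proof. by case: a => ? ?; case: b => ? ? /=; simpc. Qed.
Lemma cjM (a b : R[i]) : (a * b)^* = a^* * b^*.
Proof. by case: a => ? ?; case: b => ? ? /=; simpc. Qed.
Lemma cjN (a : R[i]) : (- a)^* = - a^*.
Proof. by case: a => ? ?. Qed.

Lemma ip0l z : ip 0 z = 0.
Proof.
have := ipDZl 1 0 0 z; rewrite scaler0 addr0 mul1r => h.
have e : ip 0 z = ip 0 z + ip 0 z - ip 0 z by rewrite addrK.
by rewrite e -h subrr.
Qed.
Lemma ipDl x y z : ip (x + y) z = ip x z + ip y z.
Proof. by rewrite -[x]scale1r ipDZl mul1r scale1r. Qed.
Lemma ipZl a x z : ip (a *: x) z = a * ip x z.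
Proof. by rewrite -[a *: x]addr0 ipDZl ip0l addr0. Qed.
Lemma ipNl x z : ip (- x) z = - ip x z.
Proof. by rewrite -scaleN1r ipZl mulN1r. Qed.
Lemma ipBl x y z : ip (x - y) z = ip x z - ip y z.
Proof. by rewrite ipDl ipNl. Qed.
Lemma ip0r z : ip z 0 = 0.
Proof. by rewrite [LHS]ipC ip0l conjc0. Qed.
Lemma ipDr x y z : ip z (x + y) = ip z x + ip z y.
Proof. by rewrite [LHS]ipC ipDl cjD (ipC x z) (ipC y z). Qed.
Lemma ipZr a x z : ip z (a *: x) = a^* * ip z x.
Proof. by rewrite [LHS]ipC ipZl cjM (ipC x z). Qed.
Lemma ipNr x z : ip z (- x) = - ip z x.
Proof. by rewrite [LHS]ipC ipNl cjN (ipC x z). Qed.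
Lemma ipBr x y z : ip z (x - y) = ip z x - ip z y.
Proof. by rewrite ipDr ipNr. Qed.

Definition rp x y := RE (ip x y).
Definition q x := rp x x.

Lemma Re_conj (z : R[i]) : RE (z^*) = RE z. Proof. by case: z. Qed.
Lemma Im_conj (z : R[i]) : IM (z^*) = - IM z. Proof. by case: z. Qed.

Lemma rpC x y : rp y x = rp x y.
Proof. by rewrite /rp ipC Re_conj. Qed.
Lemma ip_xx x : ip x x = (q x)%:C.
Proof.
have := ip_ge0 x; rewrite /q /rp; case: (ip x x) => a b.
by rewrite lecE /= => /andP[/eqP -> _].
Qed.
Lemma q_ge0 x : 0 <= q x.
Proof. by have := ip_ge0 x; rewrite ip_xx lecR. Qed.
Lemma q_eq0 x : q x = 0 -> x = 0.
Proof. by move=> h; apply: ip_eq0; rewrite ip_xx h. Qed.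
Lemma q0 : q 0 = 0.
Proof. by rewrite /q /rp ip0l. Qed.

Lemma rpDl x y z : rp (x + y) z = rp x z + rp y z.
Proof. by rewrite /rp ipDl; case: (ip x z); case: (ip y z). Qed.
Lemma rpDr x y z : rp z (x + y) = rp z x + rp z y.
Proof. by rewrite rpC rpDl !(rpC z). Qed.
Lemma rpNl x z : rp (- x) z = - rp x z.
Proof. by rewrite /rp ipNl; case: (ip x z). Qed.
Lemma rpNr x z : rp z (- x) = - rp z x.
Proof. by rewrite rpC rpNl rpC. Qed.
Lemma rpBl x y z : rp (x - y) z = rp x z - rp y z.
Proof. by rewrite rpDl rpNl. Qed.
Lemma rpBr x y z : rp z (x - y) = rp z x - rp z y.
Proof. by rewrite rpDr rpNr. Qed.
Lemma rpZl (s : R) x z : rp (s%:C *: x) z = s * rp x z.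
Proof. by rewrite /rp ipZl; case: (ip x z) => a b /=; simpc. Qed.
Lemma rpZr (s : R) x z : rp z (s%:C *: x) = s * rp z x.
Proof. by rewrite rpC rpZl rpC. Qed.
Lemma rp0l z : rp 0 z = 0. Proof. by rewrite /rp ip0l. Qed.
Lemma rp0r z : rp z 0 = 0. Proof. by rewrite /rp ip0r. Qed.

Lemma qD x y : q (x + y) = q x + 2 * rp x y + q y.
Proof. rewrite /q rpDl !rpDr (rpC y x); ring. Qed.
Lemma qB x y : q (x - y) = q x - 2 * rp x y + q y.
Proof. rewrite /q rpDl !rpDr !rpNl !rpNr (rpC y x); ring. Qed.
Lemma qN x : q (- x) = q x.
Proof. by rewrite /q rpNl rpNr opprK. Qed.
Lemma qZ (s : R) x : q (s%:C *: x) = s ^+ 2 * q x.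
Proof. by rewrite /q rpZl rpZr mulrA expr2. Qed.

Lemma CS x y : rp x y ^+ 2 <= q x * q y.
Proof.
have [y0|yn0] := eqVneq (q y) 0.
  by rewrite (q_eq0 y0) rp0r q0 expr0n mulr0.
have ygt : 0 < q y by rewrite lt_def yn0 q_ge0.
set s := rp x y / q y.
have := q_ge0 (x - s%:C *: y).
rewrite qB rpZr qZ /s => h.
have e : q x - 2 * (rp x y / q y * rp x y) + (rp x y / q y) ^+ 2 * q y
   = (q x * q y - rp x y ^+ 2) / q y by field.
rewrite e in h.
by rewrite -subr_ge0; move: h; rewrite pmulr_lge0 // invr_gt0.
Qed.

End Basic.

Section CX.
Variable R : realType. Variable H : lmodType R[i].
Lemma scale2 (v : H) : (2:R)%:C *: v = v + v.
Proof. rewrite -{2 3}[v]scale1r -scalerDl. congr (_ *: _). by apply/eqP; rewrite eq_complex /= !eqxx /= addr0. Qed.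
Lemma realCM (a b : R) : (a * b)%:C = a%:C * b%:C.
Proof. by apply/eqP; rewrite eq_complex /= !mul0r !mulr0 subr0 addr0 !eqxx. Qed.
Lemma realCD (a b : R) : (a + b)%:C = a%:C + b%:C.
Proof. by apply/eqP; rewrite eq_complex /= addr0 !eqxx. Qed.
Lemma realC1 : (1:R)%:C = 1. Proof. by []. Qed.
Lemma realCN (a : R) : (- a)%:C = - a%:C.
Proof. by apply/eqP; rewrite eq_complex /= oppr0 !eqxx. Qed.
Lemma realC0 : (0:R)%:C = 0. Proof. by []. Qed.
End CX.

Section Par.
Variable R : realType.
Variable H : lmodType R[i].
Variable ip : H -> H -> R[i].
Hypothesis hip : is_inner_product ip.
Lemma parallelogram a b : q ip (a - b) + q ip (a + b) = 2 * q ip a + 2 * q ip b.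
Proof. rewrite qB // qD //; ring. Qed.
End Par.

Section Real.
Variable R : realType.

Lemma le0_eps (x : R) : (forall e, 0 < e -> x <= e) -> x <= 0.
Proof.
move=> h; rewrite leNgt; apply/negP => hx.
have := h (x / 2) ltac:(lra); lra.
Qed.

Lemma small_inv (e : R) : 0 < e -> exists k : nat, forall j, (k <= j)%N -> 1 / (j%:R + 1) < e.
Proof.
move=> he; exists (Num.Def.archi_bound (e^-1)) => j hj.
have h1 := @archi_boundP R (e^-1) ltac:(rewrite invr_ge0; lra).
have h2 : (Num.Def.archi_bound e^-1)%:R <= j%:R :> R by rewrite ler_nat.
have hj0 : 0 < j%:R + 1 :> R by have := ler0n R j; lra.
rewrite ltr_pdivrMr // ?mul1r ?div1r.
rewrite -(@ltr_pM2l _ e^-1) ?invr_gt0 // ?mulrA ?mulVf ?gt_eqF // ?mul1r. rewrite mulr1.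
lra.
Qed.

Lemma exists_nat_gt (x : R) : exists k : nat, x < k%:R.
Proof.
have [hx|hx] := leP 0 x.
  by exists (Num.Def.archi_bound x); apply: archi_boundP.
by exists 0%N; rewrite /=; lra.
Qed.

Lemma mychoice (T : Type) (x0 : T) (P : nat -> T -> Prop) :
  (forall k, exists x, P k x) -> exists f : nat -> T, forall k, P k (f k).
Proof.
move=> h; exists (fun k => epsilon (inhabits x0) (P k)) => k.
exact: (epsilon_spec (inhabits x0) (P k) (h k)).
Qed.

End Real.

Section Norm.
Variable R : realType.
Variable H : lmodType R[i].
Variable ip : H -> H -> R[i].
Hypothesis hip : is_inner_product ip.
Local Notation q := (q ip).
Local Notation rp := (rp ip).

Definition N x := Num.sqrt (q x).

Lemma N_ge0 x : 0 <= N x. Proof. exact: sqrtr_ge0. Qed.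
Lemma N_sqr x : N x ^+ 2 = q x. Proof. by rewrite sqr_sqrtr // q_ge0. Qed.
Lemma N_eq0 x : N x = 0 -> x = 0.
Proof.
move=> /eqP; rewrite sqrtr_eq0 => h; apply: (q_eq0 hip).
by apply/eqP; rewrite eq_le h q_ge0.
Qed.
Lemma N0 : N 0 = 0. Proof. by rewrite /N q0 // sqrtr0. Qed.

Lemma rp_le x y : rp x y <= N x * N y.
Proof.
have h := CS hip x y.
have : `|rp x y| <= N x * N y.
  by rewrite -sqrtr_sqr /N -sqrtrM ?q_ge0 // ler_sqrt // mulr_ge0 // q_ge0.
by move=> h2; apply: le_trans h2; apply: ler_norm.
Qed.
Lemma rp_abs x y : `|rp x y| <= N x * N y.
Proof.
by rewrite -sqrtr_sqr /N -sqrtrM ?q_ge0 // ler_sqrt ?CS // mulr_ge0 // q_ge0.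
Qed.

Lemma N_add x y : N (x + y) <= N x + N y.
Proof.
rewrite /N -[X in _ <= X]ger0_norm ?addr_ge0 ?sqrtr_ge0 // -sqrtr_sqr ler_sqrt ?sqr_ge0 //.
rewrite qD // sqrrD !sqr_sqrtr ?q_ge0 //.
have := rp_le x y; rewrite /N; lra.
Qed.
Lemma N_opp x : N (- x) = N x. Proof. by rewrite /N qN. Qed.
Lemma N_subC x y : N (x - y) = N (y - x). Proof. by rewrite -N_opp opprB. Qed.
Lemma N_Z (s : R) x : N (s%:C *: x) = `|s| * N x.
Proof. by rewrite /N qZ // sqrtrM ?sqr_ge0 // sqrtr_sqr. Qed.
Lemma N_tri x y z : N (x - z) <= N (x - y) + N (y - z).
Proof. by have := N_add (x - y) (y - z); rewrite addrA subrK. Qed.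

Lemma N_lt x e : 0 < e -> (N x < e) = (q x < e ^+ 2).
Proof.
move=> he; have h0 := N_ge0 x; rewrite -N_sqr.
by apply/idP/idP => h; nra.
Qed.

Lemma q_le2 x y : q (x + y) <= 2 * q x + 2 * q y.
Proof.
rewrite qD //; have := q_ge0 hip (x - y); rewrite qB //; lra.
Qed.

Lemma rp_sc_abs x y : rp x y ^+ 2 <= q x * q y. Proof. exact: CS. Qed.

Definition cvgq (u : nat -> H) (l : H) :=
  forall e : R, 0 < e -> exists K : nat, forall m, (K <= m)%N -> q (u m - l) < e.
Definition cauchyq (u : nat -> H) :=
  forall e : R, 0 < e -> exists K : nat, forall m k, (K <= m)%N -> (K <= k)%N -> q (u m - u k) < e.

Lemma normip x : `|ip x x| = (q x)%:C.
Proof. by rewrite ip_xx // ger0_norm // ler0c q_ge0. Qed.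

Lemma complete_q : ip_complete ip -> forall u, cauchyq u -> exists l, cvgq u l.
Proof.
move=> hc u hu.
have [l hl] : exists l : H, forall e : R, 0 < e -> exists K : nat, forall m : nat, (K <= m)%N ->
        `|ip (u m - l) (u m - l)| < e%:C.
  apply: hc => e he; have [K hK] := hu e he; exists K => m k hm hk.
  by rewrite normip ltcR; apply: hK.
exists l => e he; have [K hK] := hl e he; exists K => m hm.
by have := hK m hm; rewrite normip ltcR.
Qed.

Lemma cvgq_N u l : cvgq u l -> forall e, 0 < e -> exists K : nat, forall m, (K <= m)%N -> N (u m - l) < e.
Proof.
move=> h e he; have [K hK] := h (e ^+ 2) (exprn_gt0 2 he).
by exists K => m hm; rewrite N_lt //; apply: hK.
Qed.

Lemma cauchy_N u : (forall e, 0 < e -> exists K : nat, forall m k, (K <= m)%N -> (K <= k)%N -> N (u m - u k) < e) ->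
  cauchyq u.
Proof.
move=> h e he; have hs : 0 < Num.sqrt e by rewrite sqrtr_gt0.
have [K hK] := h _ hs; exists K => m k hm hk.
by have := hK m k hm hk; rewrite N_lt // sqr_sqrtr //; apply: ltW.
Qed.

End Norm.

Section Proj.
Variable R : realType.
Variable H : lmodType R[i].
Variable ip : H -> H -> R[i].
Hypothesis hip : is_inner_product ip.
Hypothesis hc : ip_complete ip.
Local Notation q := (q ip).
Local Notation rp := (rp ip).

Variable S : H -> Prop.
Hypothesis S0 : S 0.
Hypothesis SD : forall x y, S x -> S y -> S (x + y).
Hypothesis SZ : forall (s : R) x, S x -> S (s%:C *: x).
Hypothesis Scl : forall u l, (forall k, S (u k)) -> cvgq ip u l -> S l.

Theorem projection z : exists s, S s /\ forall t, S t -> rp (z - s) t = 0.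
Proof.
pose E := (fun r : R => exists s, S s /\ r = q (z - s)).
have hinf : has_inf E.
  split; first by exists (q (z - 0)); exists 0.
  by exists 0 => r [s [_ ->]]; apply: q_ge0.
pose d := inf E.
have dlb : forall t, S t -> d <= q (z - t).
  by move=> t St; apply: (ge_inf hinf.2); exists t.
have hadh : forall k : nat, exists s, S s /\ q (z - s) < d + 1 / (k%:R + 1).
  move=> k; have hk : 0 < 1 / (k%:R + 1) :> R.
    by rewrite divr_gt0 // ltr_wpDl.
  have [e [s [Ss ->]] he] := inf_adherent hk hinf.
  by exists s.
have [sk hsk] := mychoice 0 hadh.
have Ssk : forall k, S (sk k) by move=> k; case: (hsk k).
have qsk : forall k, q (z - sk k) < d + 1 / (k%:R + 1) by move=> k; case: (hsk k).
have cau : forall k l, q (sk l - sk k) <= 2 / (k%:R + 1) + 2 / (l%:R + 1).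
  move=> k l.
  have hp := parallelogram hip (z - sk k) (z - sk l).
  have e1 : z - sk k - (z - sk l) = sk l - sk k.
    by rewrite opprB addrC addrA subrK.
  have e2 : z - sk k + (z - sk l) = (2:R)%:C *: (z - (1/2:R)%:C *: (sk k + sk l)).
    rewrite scalerBr scalerA -realCM mulrA mulr1 divff ?pnatr_eq0 // realC1 scale1r scale2.
    rewrite opprD !addrA; congr (_ - _); rewrite -!addrA; congr (_ + _); by rewrite addrC.
  rewrite e1 e2 qZ // in hp.
  have hm := dlb _ (SD (SZ (1/2) (Ssk k)) (SZ (1/2) (Ssk l))).
  rewrite scalerDr in hp.
  have := qsk k; have := qsk l.
  have -> : 2 / (k%:R + 1) = 2 * (1 / (k%:R + 1)) :> R by rewrite mulrA mulr1.
  have -> : 2 / (l%:R + 1) = 2 * (1 / (l%:R + 1)) :> R by rewrite mulrA mulr1.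
  move: hp hm; set A := q (z - _); lra.
have cauq : cauchyq ip sk.
  move=> e he; have [K hK] := @small_inv _ (e / 4) ltac:(lra).
  exists K => m k hm hk.
  have := cau k m; have := hK _ hm; have := hK _ hk.
  idtac.
  have -> : 2 / (m%:R + 1) = 2 * (1 / (m%:R + 1)) :> R by rewrite mulrA mulr1.
  have -> : 2 / (k%:R + 1) = 2 * (1 / (k%:R + 1)) :> R by rewrite mulrA mulr1.
  lra.
have [s hs] := complete_q hip hc cauq.
have Ss : S s := Scl Ssk hs.
exists s; split => // t St.
have [t0|tn0] := eqVneq (q t) 0.
  by rewrite (q_eq0 hip t0) rp0r.
have tgt : 0 < q t by rewrite lt_def tn0 q_ge0.
have hk : forall k, rp (z - sk k) t ^+ 2 <= (q (z - sk k) - d) * q t.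
  move=> k; set a := z - sk k; set r := rp a t.
  have := dlb _ (SD (Ssk k) (SZ (r / q t) St)).
  have -> : z - (sk k + (r / q t)%:C *: t) = a - (r / q t)%:C *: t.
    by rewrite /a opprD addrA.
  rewrite qB // rpZr // qZ // => h.
  have e : q a - 2 * (r / q t * r) + (r / q t) ^+ 2 * q t = q a - r ^+ 2 / q t.
    by field; rewrite tn0.
  rewrite e in h.
  have : r ^+ 2 / q t <= q a - d by lra.
  by rewrite ler_pdivrMr.
have main : rp (z - s) t ^+ 2 <= 0.
  apply: le0_eps => eps heps.
  pose e' := eps / (4 * (q t + 1)).
  have he' : 0 < e' by rewrite /e' divr_gt0 //; lra.
  have [K1 hK1] := small_inv he'.
  have [K2 hK2] := hs e' he'.
  pose k := maxn K1 K2.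
  have h1 := hK1 k (leq_maxl _ _).
  have h2 := hK2 k (leq_maxr _ _).
  have h3 := hk k.
  have h4 := CS hip (sk k - s) t.
  have h5 := qsk k.
  have e1 : rp (z - s) t = rp (z - sk k) t + rp (sk k - s) t.
    by rewrite -rpDl // addrA subrK.
  have e2 : e' * (4 * (q t + 1)) = eps by rewrite /e' divfK //; lra.
  rewrite e1.
  have h6 := q_ge0 hip (sk k - s).
  have h7 : (q (z - sk k) - d) * q t <= e' * q t by rewrite ler_wpM2r //; lra.
  have h8 : q (sk k - s) * q t <= e' * q t by rewrite ler_wpM2r //; lra.
  set u := rp (z - sk k) t in h3 *; set v := rp (sk k - s) t in h4 *.
  nra.
have := sqr_ge0 (rp (z - s) t).
move=> h; have : rp (z - s) t ^+ 2 = 0 by apply/eqP; rewrite eq_le main h.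
by move/eqP; rewrite sqrf_eq0 => /eqP.
Qed.

End Proj.

Section Riesz.
Variable R : realType.
Variable H : lmodType R[i].
Variable ip : H -> H -> R[i].
Hypothesis hip : is_inner_product ip.
Hypothesis hc : ip_complete ip.
Local Notation q := (q ip).
Local Notation rp := (rp ip).

Theorem riesz_real (g : H -> R) :
  (forall x y, g (x + y) = g x + g y) ->
  (forall (s : R) x, g (s%:C *: x) = s * g x) ->
  (exists K, forall x, g x ^+ 2 <= K * q x) ->
  exists v, forall x, g x = rp x v.
Proof.
move=> gD gZ [K0 hK0].
pose K := `|K0| + 1.
have Kgt : 0 < K by rewrite /K; have := normr_ge0 K0; lra.
have hK : forall x, g x ^+ 2 <= K * q x.
  move=> x; apply: le_trans (hK0 x) _; rewrite ler_wpM2r ?q_ge0 //.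
  by have := ler_norm K0; rewrite /K; lra.
have g0 : g 0 = 0.
  have := gD 0 0; rewrite addr0 => h.
  have e : g 0 = g 0 + g 0 - g 0 by rewrite addrK.
  by rewrite e -h subrr.
have gN : forall x, g (- x) = - g x.
  by move=> x; rewrite -scaleN1r -realC1 -realCN gZ mulN1r.
pose S := fun x => g x = 0.
have S0 : S 0 by [].
have SD : forall x y, S x -> S y -> S (x + y) by move=> x y; rewrite /S gD => -> ->; rewrite addr0.
have SZ : forall (s : R) x, S x -> S (s%:C *: x) by move=> s x; rewrite /S gZ => ->; rewrite mulr0.
have Scl : forall u l, (forall k, S (u k)) -> cvgq ip u l -> S l.
  move=> u l Su hl; rewrite /S.
  have : g l ^+ 2 <= 0.
    apply: le0_eps => e he.
    have [N hN] := hl (e / K) (divr_gt0 he Kgt).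
    have h := hK (u N - l).
    rewrite gD gN Su add0r sqrrN in h.
    have h2 := hN N (leqnn N).
    have : K * q (u N - l) <= K * (e / K) by rewrite ler_wpM2l //; [lra|apply: ltW].
    have e2 : K * (e / K) = e by rewrite mulrC divfK ?gt_eqF.
    lra.
  by move=> h; apply/eqP; rewrite -sqrf_eq0 eq_le h sqr_ge0.
have [allz|] := classic (forall x, g x = 0).
  by exists 0 => x; rewrite allz rp0r.
move=> /not_all_ex_not [u gu].
have [s [Ss hs]] := projection hip hc S0 SD SZ Scl u.
pose w := u - s.
have gw : g w = g u by rewrite /w gD gN Ss oppr0 addr0.
have gwn : g w != 0 by rewrite gw; apply/eqP.
have qwn : q w != 0.
  apply/eqP => /(q_eq0 hip) w0; move: gwn; by rewrite w0 g0 eqxx.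
exists ((g w / q w)%:C *: w) => x.
pose t := x - (g x / g w)%:C *: w.
have St : S t.
  rewrite /S /t gD gN gZ mulrAC -mulrA divff // mulr1 subrr //.
have h := hs t St; rewrite -/w rpC // /t rpBl // rpZl // in h.
rewrite rpZr //.
have e : rp x w = g x / g w * rp w w by lra.
rewrite e /q; field; apply/andP; split => //.
Qed.

Lemma bounded_add A : bounded_op ip A -> forall x y, A (x + y) = A x + A y.
Proof. by case=> h _ x y; rewrite -[x]scale1r h !scale1r. Qed.
Lemma bounded_0 A : bounded_op ip A -> A 0 = 0.
Proof.
move=> hA; have := bounded_add hA 0 0; rewrite addr0 => h.
have e : A 0 = A 0 + A 0 - A 0 by rewrite addrK.
by rewrite e -h subrr.
Qed.
Lemma bounded_Z A : bounded_op ip A -> forall a x, A (a *: x) = a *: A x.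
Proof.
move=> hA a x; case: (hA) => h _; have := h a x 0.
by rewrite !addr0 bounded_0 // addr0.
Qed.
Lemma bounded_N A : bounded_op ip A -> forall x, A (- x) = - A x.
Proof. by move=> hA x; rewrite -scaleN1r bounded_Z // scaleN1r. Qed.
Lemma bounded_B A : bounded_op ip A -> forall x y, A (x - y) = A x - A y.
Proof. by move=> hA x y; rewrite bounded_add // bounded_N. Qed.

Lemma bounded_M A : bounded_op ip A -> exists M, 0 <= M /\ forall x, q (A x) <= M * q x.
Proof.
case=> _ [M hM]; exists `|M|; split => // x.
have := hM x; rewrite !normip // -realCM lecR => h.
by apply: le_trans h _; rewrite ler_wpM2r ?q_ge0 // ler_norm.
Qed.

Lemma cplx_eq (z w : R[i]) : RE z = RE w -> RE ('i * z) = RE ('i * w) -> z = w.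
Proof.
case: z => a b; case: w => c d /= -> h; congr Complex.
move: h; rewrite !mul0r !mul1r !sub0r => /eqP; rewrite eqr_opp => /eqP //.
Qed.

Lemma ip_uniq a b : (forall x, ip x a = ip x b) -> a = b.
Proof.
move=> h; apply/eqP; rewrite -subr_eq0; apply/eqP; apply: (ip_eq0 hip).
by rewrite ipBr // h subrr.
Qed.

Lemma adj_exists A (hA : bounded_op ip A) y : exists v, forall x, ip (A x) y = ip x v.
Proof.
have [M [M0 hM]] := bounded_M hA.
have [v hv] : exists v, forall x, rp (A x) y = rp x v.
  apply: riesz_real.
  - by move=> x z; rewrite bounded_add // rpDl.
  - by move=> s x; rewrite bounded_Z // rpZl.
  - exists (M * q y) => x; apply: le_trans (CS hip _ _) _.
    rewrite mulrAC ler_wpM2r ?q_ge0 //.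
exists v => x; apply: cplx_eq; first exact: hv.
by rewrite -ipZl // -bounded_Z // -ipZl //; apply: hv.
Qed.

Lemma adjoint_spec A (hA : bounded_op ip A) x y : ip (A x) y = ip x (adjoint ip A y).
Proof.
rewrite /adjoint; move: x y; apply: (epsilon_spec (inhabits id) (fun B => forall x y, ip (A x) y = ip x (B y))).
exists (fun y => epsilon (inhabits 0) (fun v => forall x, ip (A x) y = ip x v)) => x y.
by apply: (epsilon_spec (inhabits 0) (fun v => forall x, ip (A x) y = ip x v) (adj_exists hA y)).
Qed.

Lemma adjoint_lin A (hA : bounded_op ip A) a y z :
  adjoint ip A (a *: y + z) = a *: adjoint ip A y + adjoint ip A z.
Proof.
apply: ip_uniq => x; rewrite -adjoint_spec // ipDr // ipZr // ipDr // ipZr //.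
by rewrite -!adjoint_spec.
Qed.

Lemma adjoint_bounded A (hA : bounded_op ip A) : bounded_op ip (adjoint ip A).
Proof.
split; first by move=> *; apply: adjoint_lin.
have [M [M0 hM]] := bounded_M hA.
exists M => y; rewrite !normip // -realCM lecR.
set a := adjoint ip A y.
have e : rp (A a) y = q a by rewrite /rp adjoint_spec.
have h1 := CS hip (A a) y; rewrite e in h1.
have h2 : q (A a) * q y <= M * q a * q y by rewrite ler_wpM2r ?q_ge0.
have h3 := q_ge0 hip a; have h4 := q_ge0 hip y.
have [a0|ap] := eqVneq (q a) 0; first by rewrite a0 mulr_ge0.
have apos : 0 < q a by rewrite lt_def ap h3.
have : q a * q a <= q a * (M * q y) by rewrite -expr2; lra.
by rewrite ler_pM2l.
Qed.

Lemma adjoint_zero A (hA : bounded_op ip A) : (forall x, A x = 0) -> forall y, adjoint ip A y = 0.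
Proof.
move=> h0 y; apply: ip_uniq => x; rewrite -adjoint_spec // h0 ip0l // ip0r //.
Qed.

End Riesz.

Section BI.
Variable R : realType.
Variable H : lmodType R[i].
Variable ip : H -> H -> R[i].
Hypothesis hip : is_inner_product ip.
Hypothesis hc : ip_complete ip.
Local Notation q := (q ip).
Local Notation rp := (rp ip).
Local Notation N := (N ip).

Variable C : H -> H.
Hypothesis hC : bounded_op ip C.
Hypothesis Csurj : forall y, exists x, C x = y.
Hypothesis Cinj : forall x, C x = 0 -> x = 0.

Local Notation Cs := (adjoint ip C).

Lemma hCs : bounded_op ip Cs. Proof. exact: adjoint_bounded. Qed.

Lemma rpCs u w : rp (C u) w = rp u (Cs w).
Proof. by rewrite /rp adjoint_spec. Qed.

Definition W w := q (Cs w) <= 1.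

Lemma W_bound u w : W w -> rp (C u) w <= N u.
Proof.
move=> hw; rewrite rpCs; apply: le_trans (rp_le hip _ _) _.
have h1 : N (Cs w) <= 1 by rewrite /N -sqrtr1 ler_sqrt.
by rewrite ler_piMr ?N_ge0.
Qed.

Definition E (m : nat) x := forall w, W w -> rp x w <= m%:R.

Lemma caseA (m : nat) x0 r : 0 < r -> (forall x, N (x - x0) < r -> E m x) ->
  forall w, W w -> N w <= 4 * m%:R / r + 1.
Proof.
move=> r0 hb w hw.
have hwN : W (- w) by rewrite /W (bounded_N hCs) qN.
have hx0 : E m x0 by apply: hb; rewrite subrr N0 //.
have h0 := hx0 _ hwN; rewrite (rpNr hip) in h0.
set t := N w.
have t0 : 0 <= t := N_ge0 ip w.
pose s := r / (2 * (t + 1)).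
have es : s * (2 * (t + 1)) = r by rewrite /s divfK //; lra.
have s0 : 0 < s by rewrite /s divr_gt0 //; lra.
have hx : E m (x0 + s%:C *: w).
  apply: hb; rewrite addrAC subrr add0r N_Z // ger0_norm; last by lra.
  rewrite -/t; nra.
have h1 := hx _ hw; rewrite rpDl // rpZl // -/(q w) -(N_sqr hip w) -/t in h1.
have h2 : s * t ^+ 2 <= 2 * m%:R by lra.
have h3 : r * t ^+ 2 <= 4 * m%:R * (t + 1).
  rewrite -es; nra.
set a := 4 * m%:R / r.
have a0 : 0 <= a by rewrite /a; apply: divr_ge0; [apply: mulr_ge0 => //; lra|apply: ltW].
have eaa : a * r = 4 * m%:R by rewrite /a divfK ?gt_eqF.
rewrite leNgt; apply/negP => ht.
have p : 0 < r * (t * (t - a - 1) + (t - a)).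
  apply: mulr_gt0 => //; apply: addr_gt0; [apply: mulr_gt0; lra|lra].
have e : r * t ^+ 2 - a * r * (t + 1) = r * (t * (t - a - 1) + (t - a)) by ring.
have e2 : a * r * (t + 1) = 4 * m%:R * (t + 1) by rewrite eaa.
lra.
Qed.

Lemma lower_from_A K0 : 0 <= K0 -> (forall w, W w -> N w <= K0) ->
  forall w, q w <= K0 ^+ 2 * q (Cs w).
Proof.
move=> K00 hK w.
have hw0 := N_ge0 ip w.
have [a0|an0] := eqVneq (N (Cs w)) 0.
  have Cw0 := N_eq0 hip a0.
  have : N w = 0.
    apply/eqP; rewrite eq_le hw0 andbT leNgt; apply/negP => hpos.
    pose s := (K0 + 1) / N w.
    have es : s * N w = K0 + 1 by rewrite /s divfK ?gt_eqF.
    have s0 : 0 < s by rewrite /s divr_gt0 //; lra.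
    have Ws : W (s%:C *: w).
      by rewrite /W (bounded_Z hCs) Cw0 scaler0 q0 //.
    have := hK _ Ws; rewrite N_Z // ger0_norm; last by lra.
    lra.
  move=> hN; rewrite -(N_sqr hip w) hN expr0n /=.
  by apply: mulr_ge0; [apply: sqr_ge0 | apply: q_ge0].
have apos : 0 < N (Cs w) by rewrite lt_def an0 N_ge0.
set a := N (Cs w) in apos an0 *.
pose s := 1 / a.
have es : s * a = 1 by rewrite /s divfK ?gt_eqF.
have s0 : 0 < s by rewrite /s divr_gt0.
have Ws : W (s%:C *: w).
  rewrite /W (bounded_Z hCs) qZ // -(N_sqr hip (Cs w)) -/a -exprMn es expr1n //.
have := hK _ Ws; rewrite N_Z // ger0_norm; last by lra.
move=> h.
have h2 : N w <= K0 * a.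
  have : s * N w * a <= K0 * a by rewrite ler_wpM2r //; lra.
  by rewrite mulrAC es mul1r.
rewrite -(N_sqr hip w) -(N_sqr hip (Cs w)) -/a -exprMn.
by rewrite ler_pXn2r // ?nnegrE //; apply: mulr_ge0 => //; lra.
Qed.

Definition Pstep (m : nat) (x0 : H) (r : R) (p : H * R * H) :=
  [/\ 0 < p.1.2, p.1.2 <= r / 2, N (p.1.1 - x0) + p.1.2 <= r, W p.2 &
      forall y, N (y - p.1.1) <= p.1.2 -> m%:R < rp y p.2].

Fixpoint bseq (st : nat -> H -> R -> H * R * H) (k : nat) : H * R :=
  match k with
  | 0 => (0, 1)
  | k'.+1 => ((st k' (bseq st k').1 (bseq st k').2).1.1,
              (st k' (bseq st k').1 (bseq st k').2).1.2)
  end.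

Lemma rp_lower x y : - (N x * N y) <= rp x y.
Proof.
have := rp_le hip (- x) y; rewrite (rpNl hip) (N_opp hip); lra.
Qed.

Lemma step_exists (m : nat) x0 r :
  (forall (m : nat) x0 r, 0 < r -> exists x, N (x - x0) < r /\ exists w, W w /\ m%:R < rp x w) ->
  0 < r -> exists p, Pstep m x0 r p.
Proof.
move=> NB r0.
have [x [hx [w [hw hlt]]]] := NB m x0 (r / 2) ltac:(lra).
pose g := rp x w - m%:R.
have g0 : 0 < g by rewrite /g; lra.
have hNw := N_ge0 ip w.
pose d := g / (2 * (N w + 1)).
have ed : d * (2 * (N w + 1)) = g by rewrite /d divfK // gt_eqF //; lra.
have d0 : 0 < d by rewrite /d divr_gt0 //; lra.
pose r1 := Num.min (r / 4) d.
have r1p : 0 < r1 by rewrite /r1 lt_min; apply/andP; split => //; lra.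
have r1a : r1 <= r / 4 by rewrite /r1 ge_min lexx.
have r1b : r1 <= d by rewrite /r1 ge_min lexx orbT.
exists (x, r1, w); split => //=; try lra.
move=> y hy.
have e : rp y w = rp x w + rp (y - x) w by rewrite -rpDl // addrC subrK.
have h1 := rp_lower (y - x) w.
have h2 : N (y - x) * N w <= d * N w by rewrite ler_wpM2r //; lra.
have h3 : d * N w <= d * (N w + 1) by rewrite ler_wpM2l //; lra.
have h4 : d * (N w + 1) = g / 2 by rewrite -ed; field.
rewrite e; rewrite /g in h4; lra.
Qed.

Theorem lower_bound : exists K, 0 <= K /\ forall w, q w <= K * q (Cs w).
Proof.
have [hA|hA] := classic (exists (m : nat) x0 r, 0 < r /\ forall x, N (x - x0) < r -> E m x).
  have [m [x0 [r [r0 hb]]]] := hA.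
  have K00 : 0 <= 4 * m%:R / r + 1.
    by apply: addr_ge0 => //; apply: divr_ge0; [apply: mulr_ge0 => //; lra|apply: ltW].
  exists ((4 * m%:R / r + 1) ^+ 2); split; first exact: sqr_ge0.
  exact: lower_from_A K00 (caseA r0 hb).
exfalso.
have NB : forall (m : nat) x0 r, 0 < r -> exists x, N (x - x0) < r /\ exists w, W w /\ m%:R < rp x w.
  move=> m x0 r r0; apply: NNPP => hn; apply: hA; exists m, x0, r; split => // x hx w hw.
  rewrite leNgt; apply/negP => hlt; apply: hn; exists x; split => //; exists w; split => //.
pose d0 : H * R * H := (0, 0, 0).
pose st := fun (m : nat) (x0 : H) (r : R) => epsilon (inhabits d0) (Pstep m x0 r).
have st_spec : forall m x0 r, 0 < r -> Pstep m x0 r (st m x0 r).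
  move=> m x0 r r0; rewrite /st; apply: epsilon_spec; exact: step_exists NB r0.
pose xs := fun k => (bseq st k).1.
pose rs := fun k => (bseq st k).2.
pose ws := fun k => (st k (xs k) (rs k)).2.
have rpos : forall k, 0 < rs k.
  elim=> [|k IH]; first by rewrite /rs /=; lra.
  by case: (st_spec k (xs k) (rs k) IH).
have sp : forall k, Pstep k (xs k) (rs k) (st k (xs k) (rs k)) by move=> k; apply: st_spec.
have sa : forall k, rs k.+1 <= rs k / 2 by move=> k; case: (sp k).
have sb : forall k, N (xs k.+1 - xs k) + rs k.+1 <= rs k by move=> k; case: (sp k).
have sd : forall k y, N (y - xs k.+1) <= rs k.+1 -> k%:R < rp y (ws k) by move=> k; case: (sp k).
have sc : forall k, W (ws k) by move=> k; case: (sp k).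
have rsk : forall k, rs k * (k%:R + 1) <= 1.
  elim=> [|k IH]; first by rewrite /rs /= add0r mulr1.
  have h1 := sa k; have h2 := rpos k; have h3 := ler0n R k.
  have -> : (k.+1)%:R = k%:R + 1 :> R by rewrite -addn1 natrD.
  have h4 : 0 <= (rs k / 2 - rs k.+1) * (k%:R + 1 + 1) by apply: mulr_ge0; lra.
  have h5 : 0 <= rs k * k%:R by apply: mulr_ge0; lra.
  nra.
have nest : forall k j, N (xs (k + j)%N - xs k) + rs (k + j)%N <= rs k.
  move=> k; elim=> [|j IH]; first by rewrite addn0 subrr (N0 hip) add0r.
  rewrite addnS; have := sb (k + j)%N; have := N_tri hip (xs (k + j).+1) (xs (k + j)%N) (xs k).
  lra.
have small : forall e, 0 < e -> exists K : nat, rs K < e.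
  move=> e he; have [K hK] := small_inv he; exists K.
  have := hK K (leqnn K); have := rsk K; have k0 : 0 < K%:R + 1 :> R by have := ler0n R K; lra.
  move=> h1 h2; apply: le_lt_trans h2; rewrite ler_pdivlMr // mul1r //.
have cau : cauchyq ip xs.
  apply: (cauchy_N hip) => e he; have [K hK] := small (e / 2) ltac:(lra).
  exists K => m k hm hk.
  have h1 := nest K (m - K)%N; rewrite subnKC // in h1.
  have h2 := nest K (k - K)%N; rewrite subnKC // in h2.
  have := N_tri hip (xs m) (xs K) (xs k); rewrite (N_subC hip (xs K)).
  have := rpos m; have := rpos k; lra.
have [l hl] := complete_q hip hc cau.
have hlN := cvgq_N hip hl.
have close : forall k, N (l - xs k) <= rs k.
  move=> k; rewrite -subr_le0; apply: le0_eps => e he.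
  have [K hK] := hlN e he; pose m := maxn K k.
  have h1 := hK m (leq_maxl _ _).
  have h2 := nest k (m - k)%N; rewrite subnKC ?leq_maxr // in h2.
  have := N_tri hip l (xs m) (xs k); rewrite (N_subC hip l (xs m)).
  have := rpos m; lra.
have [u hu] := Csurj l.
have [k hk] := exists_nat_gt (N u).
have h1 := sd k l (close k.+1).
have h2 := W_bound u (sc k); rewrite hu in h2.
by have := lt_trans h1 (le_lt_trans h2 hk); rewrite ltxx.
Qed.

End BI.

Section Surj.
Variable R : realType.
Variable H : lmodType R[i].
Variable ip : H -> H -> R[i].
Hypothesis hip : is_inner_product ip.
Hypothesis hc : ip_complete ip.
Local Notation q := (q ip).
Local Notation rp := (rp ip).
Local Notation N := (N ip).

Variable C : H -> H.
Hypothesis hC : bounded_op ip C.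
Hypothesis Csurj : forall y, exists x, C x = y.
Hypothesis Cinj : forall x, C x = 0 -> x = 0.

Local Notation Cs := (adjoint ip C).

Theorem adjoint_surj : forall z, exists y, Cs y = z.
Proof.
have hCs := hCs hip hc hC.
have [K [K0 hK]] := lower_bound hip hc hC Csurj.
have [M [M0 hM]] := bounded_M hip hCs.
pose S := fun v => exists y, Cs y = v.
have S0 : S 0 by exists 0; apply: bounded_0 hCs.
have SD : forall x y, S x -> S y -> S (x + y).
  by move=> x y [a <-] [b <-]; exists (a + b); rewrite (bounded_add hCs).
have SZ : forall (s : R) x, S x -> S (s%:C *: x).
  by move=> s x [a <-]; exists (s%:C *: a); rewrite (bounded_Z hCs).
have Scl : forall u l, (forall k, S (u k)) -> cvgq ip u l -> S l.
  move=> u l Su hl.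
  have [y hy] := mychoice 0 Su.
  have cau : cauchyq ip y.
    move=> e he.
    have [N1 hN1] := hl (e / (4 * (K + 1))) ltac:(apply: divr_gt0 => //; lra).
    exists N1 => m k hm hk.
    have h1 := hK (y m - y k).
    rewrite (bounded_B hCs) !hy in h1.
    have h2 := q_le2 hip (u m - l) (l - u k).
    have eq_h2 : u m - l + (l - u k) = u m - u k by rewrite addrA subrK.
    rewrite eq_h2 in h2.
    have h3 := hN1 m hm; have h4 := hN1 k hk.
    have e4 : q (l - u k) = q (u k - l) by rewrite -(qN hip) opprB.
    have ee : e / (4 * (K + 1)) * (4 * (K + 1)) = e by rewrite divfK // gt_eqF //; lra.
    have h5 : K * q (u m - u k) <= K * (2 * q (u m - l) + 2 * q (l - u k)).
      by rewrite ler_wpM2l.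
    have h6 : K * (2 * q (u m - l) + 2 * q (l - u k)) <= K * (4 * (e / (4 * (K + 1)))).
      by rewrite ler_wpM2l //; lra.
    have h7 : K * (4 * (e / (4 * (K + 1)))) < e.
      have : 0 < e / (4 * (K + 1)) by apply: divr_gt0 => //; lra.
      move=> hpos; nra.
    lra.
  have [ys hys] := complete_q hip hc cau.
  exists ys.
  have hq : q (l - Cs ys) <= 0.
    apply: le0_eps => e he.
    have [N1 hN1] := hl (e / 4) ltac:(lra).
    have [N2 hN2] := hys (e / (4 * (M + 1))) ltac:(apply: divr_gt0 => //; lra).
    pose k := maxn N1 N2.
    have h1 := hN1 k (leq_maxl _ _).
    have h2 := hN2 k (leq_maxr _ _).
    have h3 := hM (y k - ys); rewrite (bounded_B hCs) hy in h3.
    have h4 := q_le2 hip (l - u k) (u k - Cs ys).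
    have eq_h4 : l - u k + (u k - Cs ys) = l - Cs ys by rewrite addrA subrK.
    rewrite eq_h4 in h4.
    have e4 : q (l - u k) = q (u k - l) by rewrite -(qN hip) opprB.
    have h5 : M * q (y k - ys) <= M * (e / (4 * (M + 1))) by rewrite ler_wpM2l //; apply: ltW.
    have h6 : M * (e / (4 * (M + 1))) <= e / 4.
      have ef : e / (4 * (M + 1)) * (4 * (M + 1)) = e by rewrite divfK // gt_eqF //; lra.
      have f0 : 0 < e / (4 * (M + 1)) by apply: divr_gt0 => //; lra.
      move: ef f0; set f := e / (4 * (M + 1)); lra.
    lra.
  have : q (l - Cs ys) = 0 by apply/eqP; rewrite eq_le hq q_ge0.
  move/(q_eq0 hip)/eqP; rewrite subr_eq0 => /eqP ->; done.
move=> z.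
have [s [Ss hs]] := projection hip hc S0 SD SZ Scl z.
set t := z - s in hs.
have ht : forall y, rp (C t) y = 0.
  by move=> y; rewrite (rpCs hip hc hC); apply: hs; exists y.
have Ct := ht (C t).
have t0 : t = 0 by apply: Cinj; apply: (q_eq0 hip).
case: Ss => y hy; exists y; rewrite hy.
by move/eqP: t0; rewrite subr_eq0 => /eqP.
Qed.

End Surj.

Lemma fchoice (I T : Type) (t0 : T) (P : I -> T -> Prop) :
  (forall i, exists x, P i x) -> exists f : I -> T, forall i, P i (f i).
Proof.
move=> h; exists (fun i => epsilon (inhabits t0) (P i)) => i.
exact: (epsilon_spec (inhabits t0) (P i) (h i)).
Qed.

Lemma ord_neq_cases n (k j : 'I_n) : k != j -> (k < j)%N \/ (j < k)%N.
Proof.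
move=> hne; case: (ltngtP k j) => h; [by left|by right|].
by move: hne; rewrite (ord_inj h) eqxx.
Qed.

Section Alg.
Variable R : realType.
Variable H : lmodType R[i].
Variable ip : H -> H -> R[i].
Hypothesis hip : is_inner_product ip.
Hypothesis hc : ip_complete ip.
Variable n : nat.

Lemma sum_single (F : 'I_n -> H) j : (forall k, k != j -> F k = 0) -> \sum_(k < n) F k = F j.
Proof.
move=> h; rewrite (bigD1 j) //= big1 ?addr0 // => k /= hk; exact: h.
Qed.

Lemma diag_inv (L : opmx H n) (hb : forall i j, bounded_op ip (L i j)) (hL : invertible_lower L) i :
  exists Li : H -> H, (forall x, L i i (Li x) = x) /\ (forall x, Li (L i i x) = x).
Proof.
case: hL => lowL [B [lowB [LB BL]]].
have r : forall x, L i i (B i i x) = x.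
  move=> x; have := congr1 (fun f => f i i x) LB; rewrite /opmx_mul /opmx_id eqxx /= => e.
  rewrite -[RHS]e; symmetry; apply: sum_single => k hk; case: (ord_neq_cases hk) => h.
    by rewrite (lowB _ _ h) (bounded_0 (hb _ _)).
  by rewrite lowL.
have l : forall x, B i i (L i i x) = x + B i i (L i i 0).
  move=> x.
  have e1 := congr1 (fun f => f i i x) BL; have e0 := congr1 (fun f => f i i 0) BL.
  rewrite /opmx_mul /opmx_id eqxx /= in e1 e0.
  rewrite (bigD1 i) //= in e1; rewrite (bigD1 i) //= in e0.
  have e : \sum_(k < n | k != i) B i k (L k i x) = \sum_(k < n | k != i) B i k (L k i 0).
    apply: eq_bigr => k hk; case: (ord_neq_cases hk) => h.
      by rewrite !lowL.
    by rewrite !lowB.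
  rewrite e in e1.
  move: e1 e0; set S := \sum_(k < n | k != i) _ => e1 e0.
  have h1 : B i i (L i i x) = x - S by rewrite -[in RHS]e1 addrK.
  have h0 : B i i (L i i 0) = - S by apply/eqP; rewrite -addr_eq0 e0.
  by rewrite h1 h0.
have inj : forall x y, L i i x = L i i y -> x = y.
  move=> x y hxy; have := l x; rewrite hxy l => /eqP; rewrite eq_sym (inj_eq (addIr _)) => /eqP //.
exists (B i i); split => // x; apply: inj; exact: r.
Qed.

Variables (A C : opmx H n).
Hypothesis hbA : forall i j, bounded_op ip (A i j).
Hypothesis hbC : forall i j, bounded_op ip (C i j).
Hypothesis hLA : invertible_lower A.
Hypothesis hLC : invertible_lower C.
Hypothesis heq : opmx_mul A (opmx_adj ip A) = opmx_mul C (opmx_adj ip C).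

Lemma heq_entry i j x :
  \sum_(k < n) A i k (adjoint ip (A j k) x) = \sum_(k < n) C i k (adjoint ip (C j k) x).
Proof. by have := congr1 (fun f => f i j x) heq; rewrite /opmx_mul /opmx_adj. Qed.

Lemma main_ind (ai ci : 'I_n -> H -> H)
  (hai : forall i, (forall x, A i i (ai i x) = x) /\ (forall x, ai i (A i i x) = x))
  (hci : forall i, (forall x, C i i (ci i x) = x) /\ (forall x, ci i (C i i x) = x)) :
  forall m (j : 'I_n), (j < m)%N ->
   (forall i l x, A i j (adjoint ip (A l j) x) = C i j (adjoint ip (C l j) x)) /\
   (forall i x, C i j x = A i j (ai j (C j j x))).
Proof.
have lowA := hLA.1; have lowC := hLC.1.
elim=> [|m IH] j //= hj.
have IHk : forall k : 'I_n, (k < j)%N ->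
    forall i l x, A i k (adjoint ip (A l k) x) = C i k (adjoint ip (C l k) x).
  by move=> k hk; case: (IH k (leq_trans hk hj)).
have Q : forall i x, A i j (adjoint ip (A j j) x) = C i j (adjoint ip (C j j) x).
  move=> i x; have := heq_entry i j x.
  rewrite (bigD1 j) //= [in RHS](bigD1 j) //=.
  have -> : \sum_(k < n | k != j) A i k (adjoint ip (A j k) x) =
            \sum_(k < n | k != j) C i k (adjoint ip (C j k) x).
    apply: eq_bigr => k hk; case: (ord_neq_cases hk) => h.
      exact: IHk.
    rewrite (adjoint_zero hip hc (hbA j k) (lowA j k h)).
    rewrite (adjoint_zero hip hc (hbC j k) (lowC j k h)).
    by rewrite (bounded_0 (hbA i k)) (bounded_0 (hbC i k)).
  by move/addIr.
have [aK1 aK2] := hai j; have [cK1 cK2] := hci j.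
pose V := fun z => ai j (C j j z).
have hAd : forall y, adjoint ip (A j j) y = V (adjoint ip (C j j) y).
  move=> y; rewrite /V -(Q j y) aK2 //.
have Csurj : forall z, exists y, adjoint ip (C j j) y = z.
  apply: (adjoint_surj hip hc (hbC j j)).
  - by move=> y; exists (ci j y); rewrite cK1.
  - move=> x hx; rewrite -(cK2 x) hx.
    by rewrite -{1}(bounded_0 (hbC j j)) cK2.
have G : forall i z, C i j z = A i j (V z).
  move=> i z; have [y <-] := Csurj z.
  by rewrite -(Q i y) hAd.
split; last by move=> i x; rewrite G.
move=> i l x.
rewrite G; congr (A i j _).
have iso : forall u z, ip (V u) (V z) = ip u z.
  move=> u z; have [y <-] := Csurj z.
  rewrite -hAd -(adjoint_spec hip hc (hbA j j)) /V aK1.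
  by rewrite (adjoint_spec hip hc (hbC j j)).
apply: (ip_uniq hip) => u.
pose u' := ci j (A j j u).
have Vu : V u' = u by rewrite /V /u' cK1 aK2.
rewrite -Vu iso -(adjoint_spec hip hc (hbC l j)) G Vu.
by rewrite (adjoint_spec hip hc (hbA l j)).
Qed.

End Alg.

Local Close Scope complex_scope.
Unset Implicit Arguments.

Theorem lemma4 (R : realType) (H : lmodType R[i]) (ip : H -> H -> R[i])
  (hH : is_hilbert ip) (n : nat) (L1 L2 : opmx H n)
  (hb1 : forall i j, bounded_op ip (L1 i j))
  (hb2 : forall i j, bounded_op ip (L2 i j))
  (hL1 : invertible_lower L1) (hL2 : invertible_lower L2)
  (heq : opmx_mul L1 (opmx_adj ip L1) = opmx_mul L2 (opmx_adj ip L2)) :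
  L2 = opmx_mul (opmx_mul L1 (opmx_inv (opmx_diag L1))) (opmx_diag L2).
Proof.
case: hH => hip hc.
have [ai hai] := fchoice id (diag_inv hb1 hL1).
have [ci hci] := fchoice id (diag_inv hb2 hL2).
have PG := main_ind hip hc hb1 hb2 hL1 hL2 heq hai hci.
have G : forall (j i : 'I_n) x, L2 i j x = L1 i j (ai j (L2 j j x)).
  by move=> j; case: (PG j.+1 j (ltnSn j)).
have ai0 : forall m, ai m 0 = 0.
  by move=> m; rewrite -{1}(bounded_0 (hb1 m m)) (hai m).2.
pose D0 : opmx H n := fun i j => if i == j then ai i else (fun _ => 0).
have D0inv : is_inverse (opmx_diag L1) D0.
  split.
    apply: functional_extensionality => i; apply: functional_extensionality => j.
    apply: functional_extensionality => x.
    rewrite /opmx_mul /opmx_id (@sum_single _ _ _ _ i); last first.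
      by move=> k hk; rewrite /opmx_diag eq_sym (negbTE hk).
    rewrite /opmx_diag eqxx /D0; have [e|hne] := eqVneq i j.
      by subst j; rewrite (hai i).1.
    rewrite ?(negbTE hne).
    exact: (bounded_0 (hb1 i i)).
  apply: functional_extensionality => i; apply: functional_extensionality => j.
  apply: functional_extensionality => x.
  rewrite /opmx_mul /opmx_id (@sum_single _ _ _ _ i); last first.
    by move=> k hk; rewrite /D0 eq_sym (negbTE hk).
  rewrite /opmx_diag /D0 eqxx; have [e|hne] := eqVneq i j.
    by subst j; rewrite ?eqxx (hai i).2.
  rewrite ?(negbTE hne).
  exact: ai0.
pose D := opmx_inv (opmx_diag L1).
have Dinv : is_inverse (opmx_diag L1) D.
  by rewrite /D /opmx_inv; apply: epsilon_spec; exists D0.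
have DE : forall i j y, D i j y = ai i (if i == j then y else 0).
  move=> i j y; have := congr1 (fun f => f i j y) Dinv.1.
  rewrite /opmx_mul /opmx_id (@sum_single _ _ _ _ i); last first.
    by move=> k hk; rewrite /opmx_diag eq_sym (negbTE hk).
  rewrite /opmx_diag eqxx => <-; by rewrite (hai i).2.
rewrite -/D; clearbody D.
apply: functional_extensionality => i; apply: functional_extensionality => j.
apply: functional_extensionality => x.
rewrite /opmx_mul (@sum_single _ _ _ _ j); last first.
  move=> k hk; rewrite /opmx_diag (negbTE hk).
  apply: big1 => m _; rewrite DE; case: ifP => _; rewrite ai0; exact: (bounded_0 (hb1 i m)).
rewrite /opmx_diag eqxx (@sum_single _ _ _ _ j); last first.
  by move=> k hk; rewrite DE (negbTE hk) ai0 (bounded_0 (hb1 i k)).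
by rewrite DE eqxx -G.
Qed.
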